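(* Let $G$ be a connected planar graph, $R\ge1$ an integer and $\epsilon\in(0,1]$. There is an absolute constant $K$ such that for every pair $u,v$ of vertices, Algorithm TC with parameters $R,\epsilon$ separates $u$ and $v$ with probability at most $K\,d(u,v)/R$.
   Context: Let $G=(V,E)$ be a connected unweighted planar graph and $d(\cdot,\cdot)$ its shortest-path distance. Two vertices are separated if they lie in different output clusters. Algorithm TC with integer parameter $R\ge 1$ and $\epsilon\in(0,1]$: Phase 0: set $F=\emptyset$; choose an arbitrary root $r_0$, let the level of $x$ be its distance from $r_0$ in $G$, sample $k$ uniformly from $\{0,\dots,R-1\}$, and add to $F$ every edge joining a vertex at level $\ell$ to one at level $\ell+1$ with $\ell\equiv k\pmod R$. Then for phases $i=1,2$: for each connected component $C$ of $(V,E\setminus F)$ (components as at the start of the phase), choose as root $r_i$ the vertex of $C$ closest to the root $r_{i-1}$ used in the previous phase for the component from which $C$ arose (ties broken arbitrarily), let levels be distances from $r_i$ within $C$, sample $k_1$ uniformly from $\{0,\dots,R-1\}$, sample $\kappa\in(0,R]$ from the density $\epsilon\,\kappa^{\epsilon-1}/R^{\epsilon}$ and set $k_2=\lceil\kappa\rceil$, and add to $F$ every edge of $C$ joining a vertex at level $\ell$ to a vertex at level $\ell+1$ with $\ell\equiv k_1\pmod R$ or $\ell\equiv k_1+k_2\pmod R$. All samples are independent. Output the connected components of $(V,E\setminus F)$ as clusters. *)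

(* Defs.v *)
From HB Require Import structures.
From mathcomp Require Import all_boot all_order all_algebra perm.
From mathcomp Require Import reals exp.
Set Implicit Arguments. Unset Strict Implicit. Unset Printing Implicit Defensive.
Import Order.TTheory GRing.Theory Num.Theory.

Section Graph.
Variable V : finType.
Implicit Types (e : rel V) (x y : V).

Definition nbhd e (S : {set V}) : {set V} := S :|: [set y | [exists x in S, e x y]].
Definition ball e x (n : nat) : {set V} := iter n (nbhd e) [set x].
(* shortest-path distance in the graph (V,e); equals #|V| if unreachable *)
Definition gdist e x y : nat := find (fun n => y \in ball e x n) (iota 0 #|V|).
Definition comp e x : {set V} := [set y | connect e x y].

Definition darts e : {pred V * V} := [pred p | e p.1 p.2].
Definition swap_dart (p : V * V) : V * V := (p.2, p.1).
Definition rotation_system e (sigma : {perm (V * V)}) : Prop :=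
  (forall d, d \in darts e -> (sigma d \in darts e) /\ (sigma d).1 = d.1) /\
  (forall d d', d \in darts e -> d' \in darts e -> d.1 = d'.1 ->
     fconnect sigma d d').
(* faces of the embedding = orbits of the face permutation sigma o swap *)
Definition faces e (sigma : {perm (V * V)}) : nat :=
  fcard (fun d => sigma (swap_dart d)) (darts e).
(* a connected graph is planar iff it has no edge or admits a rotation
   system of genus 0, i.e. V - E + F = 2 (E = #darts / 2) *)
Definition planar e : Prop :=
  (forall x y, ~~ e x y) \/
  exists sigma, rotation_system e sigma /\
     #|V| + faces e sigma = (#|darts e| %/ 2 + 2)%N.

Definition connected_graph e : Prop := forall x y, connect e x y.

Definition cut_edge (lv : V -> nat) (P : pred nat) x y : bool :=
  ((lv y == (lv x).+1) && P (lv x)) || ((lv x == (lv y).+1) && P (lv y)).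
Definition remove_edges e (c : rel V) : rel V := fun x y => e x y && ~~ c x y.

Definition phase0 e (R : nat) (r0 : V) (k : nat) : rel V :=
  remove_edges e (cut_edge (gdist e r0) (fun l => l %% R == k)).

(* Arbitrary tie breaking: tb i C r M chooses, in phase i, for the component
   C whose parent component had root r, a vertex of the set M of vertices of C
   closest to r. *)
Definition tiebreak := nat -> {set V} -> V -> {set V} -> V.
Definition valid_tiebreak (tb : tiebreak) : Prop :=
  forall i C r M, M != set0 -> tb i C r M \in M.

(* root of the component of x in (V,ec) in phase i; ep is the graph of the
   previous phase and prv x the root used in that phase for the component
   from which x's component arose; closeness is measured in (V,ep). *)
Definition new_root (tb : tiebreak) (i : nat) (ep : rel V) (prv : V -> V)
    (ec : rel V) x : V :=
  let C := comp ec x in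
  let r := prv x in
  tb i C r [set y in C | [forall z in C, gdist ep r y <= gdist ep r z]].

(* edges cut in phase 1/2; the samples (k1,k2) of a component are indexed
   by its root *)
Definition phase_cut (R : nat) (root : V -> V) (ec : rel V)
    (s : V -> nat * nat) : rel V :=
  fun x y => let r := root x in
    cut_edge (gdist ec r)
      (fun l => (l %% R == (s r).1 %% R) || (l %% R == ((s r).1 + (s r).2) %% R))
      x y.

Definition TC_output e (R : nat) (r0 : V) (tb : tiebreak) (k : nat)
    (s1 s2 : V -> nat * nat) : rel V :=
  let e1 := phase0 e R r0 k in
  let rt1 := new_root tb 1 e (fun _ => r0) e1 in
  let e2 := remove_edges e1 (phase_cut R rt1 e1 s1) in
  let rt2 := new_root tb 2 e1 rt1 e2 in
  remove_edges e2 (phase_cut R rt2 e2 s2).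

Definition TC_separates e R r0 tb k s1 s2 (u v : V) : bool :=
  ~~ connect (TC_output e R r0 tb k s1 s2) u v.

End Graph.

Section Prob.
Local Open Scope ring_scope.
Variable rT : realType.

(* P(ceil kappa = j) for kappa with density eps kappa^(eps-1)/R^eps on (0,R] *)
Definition k2_weight (R : nat) (eps : rT) (j : nat) : rT :=
  (j%:R / R%:R) `^ eps - ((j.-1)%:R / R%:R) `^ eps.

(* a sample (a,b) : 'I_R * 'I_R encodes k1 = a, k2 = b+1 *)
Definition sample_weight (R : nat) (eps : rT) (ab : 'I_R * 'I_R) : rT :=
  R%:R^-1 * k2_weight R eps (ab.2).+1.
Definition decode (V : finType) (R : nat) (f : {ffun V -> 'I_R * 'I_R})
  : V -> nat * nat := fun x => (nat_of_ord (f x).1, (nat_of_ord (f x).2).+1).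

(* Probability that TC separates u and v: k uniform, and one independent
   sample (k1,k2) per potential root vertex for each of phases 1 and 2. *)
Definition TC_sep_prob (V : finType) (e : rel V) (R : nat) (eps : rT) (r0 : V)
    (tb : tiebreak V) (u v : V) : rT :=
  \sum_(k : 'I_R) \sum_(f1 : {ffun V -> 'I_R * 'I_R})
    \sum_(f2 : {ffun V -> 'I_R * 'I_R})
    (R%:R^-1 * (\prod_(x : V) sample_weight eps (f1 x))
             * (\prod_(x : V) sample_weight eps (f2 x)))
    * (TC_separates e R r0 tb k (decode f1) (decode f2) u v)%:R.
End Prob.

(* Main.v *)
Require Import Defs.
From HB Require Import structures.
From mathcomp Require Import all_boot all_order all_algebra perm.
From mathcomp Require Import reals exp.
Import Order.TTheory GRing.Theory Num.Theory.
Local Open Scope ring_scope.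

Section W.
Variable rT : realType.
Variables (R : nat) (eps : rT).
Hypothesis R1 : (1 <= R)%N.
Hypothesis eps01 : 0 < eps <= 1.

Let F (j : nat) : rT := (j%:R / R%:R) `^ eps.

Lemma k2w_ge0 j : 0 <= k2_weight R eps j.+1.
Proof.
rewrite /k2_weight /= subr_ge0.
case/andP: eps01 => e0 _.
apply: (ge0_ler_powR (ltW e0)); rewrite ?nnegrE ?divr_ge0 //.
by rewrite ler_pM2r ?ler_nat // invr_gt0 ltr0n.
Qed.

Lemma sum_k2w : \sum_(b < R) k2_weight R eps b.+1 = 1.
Proof.
have tel n : \sum_(b < n) k2_weight R eps b.+1 = F n - F 0.
  elim: n => [|n IH]; first by rewrite big_ord0 subrr.
  by rewrite big_ord_recr /= IH /k2_weight /= addrC addrA subrK.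
rewrite tel /F mul0r powR0; last by case/andP: eps01 => /gt_eqF ->.
by rewrite subr0 divff ?powR1 // pnatr_eq0 -lt0n.
Qed.

Lemma sw_ge0 (ab : 'I_R * 'I_R) : 0 <= sample_weight eps ab.
Proof. by rewrite /sample_weight mulr_ge0 ?invr_ge0 ?ler0n ?k2w_ge0. Qed.

Lemma sum_sw : \sum_(ab : 'I_R * 'I_R) sample_weight eps ab = 1.
Proof.
rewrite -(pair_bigA _ (fun a b => sample_weight eps (a, b))) /=.
rewrite /sample_weight /=.
under eq_bigr do rewrite -mulr_sumr sum_k2w mulr1.
by rewrite sumr_const card_ord -[_ *+ _]mulr_natr mulVf // pnatr_eq0 -lt0n.
Qed.


Lemma count_le1 (m c : nat) :
  \sum_(a : 'I_R) ((m %% R == (a + c) %% R)%N : nat)%:R <= 1 :> rT.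
Proof.
set A := [pred a : 'I_R | (m %% R == (a + c) %% R)%N].
have -> : \sum_(a : 'I_R) ((m %% R == (a + c) %% R)%N : nat)%:R
          = \sum_(a in A) 1 :> rT.
  by rewrite [RHS]big_mkcond; apply: eq_bigr => a _; rewrite inE; case: (_ == _).
rewrite sumr_const lern1.
apply/card_le1_eqP => x y; rewrite !inE => /eqP hx /eqP hy.
apply: val_inj => /=.
have : (x + c = y + c %[mod R])%N by rewrite -hx -hy.
by move/eqP; rewrite eqn_modDr !modn_small // => /eqP.
Qed.

Lemma sw_ind_bound (m : nat) (c : 'I_R -> nat) :
  \sum_(ab : 'I_R * 'I_R) sample_weight eps ab *
     ((m %% R == (ab.1 + c ab.2) %% R)%N : nat)%:R <= R%:R^-1.
Proof.
rewrite -(pair_bigA _ (fun a b => sample_weight eps (a, b) *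
     ((m %% R == (a + c b) %% R)%N : nat)%:R)) /= exchange_big /=.
apply: (@le_trans _ _ (R%:R^-1 * \sum_(b < R) k2_weight R eps b.+1));
  last by rewrite sum_k2w mulr1.
rewrite mulr_sumr.
apply: ler_sum => b _.
rewrite /sample_weight /= -mulr_sumr.
apply: ler_piMr; first by rewrite mulr_ge0 ?invr_ge0 ?ler0n ?k2w_ge0.
exact: count_le1.
Qed.

Lemma orb_le (a b : bool) : ((a || b) : nat)%:R <= (a : nat)%:R + (b : nat)%:R :> rT.
Proof. by case: a; case: b; rewrite /= ?addr0 ?add0r // -natrD ler_nat. Qed.

Section V.
Variable V : finType.
Definition Q (f : {ffun V -> 'I_R * 'I_R}) : rT := \prod_x sample_weight eps (f x).

Lemma Q_ge0 f : 0 <= Q f.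
Proof. by apply: prodr_ge0 => x _; apply: sw_ge0. Qed.

Lemma sumQ : \sum_f Q f = 1.
Proof.
rewrite /Q -(bigA_distr_bigA (fun (x : V) (j : 'I_R * 'I_R) => sample_weight eps j)) /=.
by rewrite big1 // => x _; apply: sum_sw.
Qed.

Lemma marg (r : V) (h : 'I_R * 'I_R -> rT) :
  \sum_f Q f * h (f r) = \sum_j sample_weight eps j * h j.
Proof.
pose G (x : V) (j : 'I_R * 'I_R) :=
  if x == r then sample_weight eps j * h j else sample_weight eps j.
have -> : \sum_f Q f * h (f r) = \sum_(f : {ffun V -> 'I_R * 'I_R}) \prod_x G x (f x).
  apply: eq_bigr=> f _; rewrite /Q (bigD1 r) // [in RHS](bigD1 r) //= /G eqxx.
  rewrite mulrAC; congr (_ * _); apply: eq_bigr => x hx; by rewrite (negbTE hx).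
rewrite -(bigA_distr_bigA G) /= (bigD1 r) //= [X in _ * X]big1 ?mulr1.
  by apply: eq_bigr => j _; rewrite /G eqxx.
move=> x /negbTE hx; rewrite -(sum_sw); apply: eq_bigr => j _; by rewrite /G hx.
Qed.

Definition Pc (l : nat) (s : nat * nat) : bool :=
  ((l %% R == s.1 %% R) || (l %% R == (s.1 + s.2) %% R))%N.

Lemma samp_bound (r : V) (l : nat) :
  \sum_f Q f * (Pc l (decode f r) : nat)%:R <= 2%:R * R%:R^-1.
Proof.
rewrite (marg r (fun j => (Pc l (nat_of_ord j.1, (nat_of_ord j.2).+1) : nat)%:R)).
apply: (@le_trans _ _ (\sum_j (sample_weight eps j *
     ((l %% R == (j.1 + 0) %% R)%N : nat)%:R
     + sample_weight eps j * ((l %% R == (j.1 + (j.2).+1) %% R)%N : nat)%:R))).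
  apply: ler_sum => j _; rewrite -mulrDr ler_wpM2l ?sw_ge0 // /Pc /= addn0.
  exact: orb_le.
rewrite big_split /= mulr2n mulrDl mul1r.
apply: lerD.
  exact: (sw_ind_bound l (fun _ => 0%N)).
exact: (sw_ind_bound l (fun b => (nat_of_ord b).+1)).
Qed.


Definition Ex (T : 'I_R -> {ffun V -> 'I_R * 'I_R} -> {ffun V -> 'I_R * 'I_R} -> rT) : rT :=
  \sum_(k : 'I_R) \sum_(f1 : {ffun V -> 'I_R * 'I_R}) \sum_(f2 : {ffun V -> 'I_R * 'I_R})
    (R%:R^-1 * Q f1 * Q f2) * T k f1 f2.

Lemma m4 (a b c d : rT) : a * b * c * d = a * (b * (c * d)).
Proof. by rewrite !mulrA. Qed.

Lemma W_ge0 f1 f2 : 0 <= R%:R^-1 * Q f1 * Q f2.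
Proof. by rewrite !mulr_ge0 ?invr_ge0 ?ler0n ?Q_ge0. Qed.

Lemma Ex_le T T' : (forall k f1 f2, T k f1 f2 <= T' k f1 f2) -> Ex T <= Ex T'.
Proof.
move=> h; apply: ler_sum => k _; apply: ler_sum => f1 _; apply: ler_sum => f2 _.
by rewrite ler_wpM2l ?W_ge0.
Qed.

Lemma Ex_add T T' : Ex (fun k f1 f2 => T k f1 f2 + T' k f1 f2) = Ex T + Ex T'.
Proof.
rewrite /Ex -big_split; apply: eq_bigr => k _; rewrite -big_split; apply: eq_bigr => f1 _.
by rewrite -big_split; apply: eq_bigr => f2 _; rewrite mulrDr.
Qed.

Lemma Ex_expand T : Ex T = \sum_(k : 'I_R) R%:R^-1 * \sum_f1 Q f1 * \sum_f2 Q f2 * T k f1 f2.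
Proof.
rewrite /Ex; apply: eq_bigr => k _; rewrite mulr_sumr; apply: eq_bigr => f1 _.
rewrite !mulr_sumr; apply: eq_bigr => f2 _. exact: m4.
Qed.

Lemma sumQ_const c : \sum_(f : {ffun V -> 'I_R * 'I_R}) Q f * c = c.
Proof. by rewrite -mulr_suml sumQ mul1r. Qed.

Lemma sumk_bound (X : 'I_R -> rT) c : (forall k, X k <= c) -> \sum_(k : 'I_R) R%:R^-1 * X k <= c.
Proof.
move=> h; apply: (@le_trans _ _ (\sum_(k : 'I_R) R%:R^-1 * c)).
  by apply: ler_sum => k _; rewrite ler_wpM2l ?invr_ge0 ?ler0n.
rewrite sumr_const card_ord -(mulr_natl (R%:R^-1 * c)) mulrA mulfV ?mul1r //.
by rewrite pnatr_eq0 -lt0n.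
Qed.

Lemma sumf_bound (X : {ffun V -> 'I_R * 'I_R} -> rT) c :
  (forall f, X f <= c) -> \sum_f Q f * X f <= c.
Proof.
move=> h; apply: (@le_trans _ _ (\sum_f Q f * c)); last by rewrite sumQ_const.
by apply: ler_sum => f _; rewrite ler_wpM2l ?Q_ge0.
Qed.

Lemma Ex_phase0 (l : nat) :
  Ex (fun k _ _ => ((l %% R == k)%N : nat)%:R) <= R%:R^-1.
Proof.
rewrite Ex_expand.
under eq_bigr do under eq_bigr do rewrite sumQ_const.
under eq_bigr do rewrite sumQ_const.
rewrite -mulr_sumr -[X in _ <= X]mulr1 ler_wpM2l ?invr_ge0 ?ler0n //.
apply: le_trans (count_le1 l 0).
by apply: ler_sum => k _; rewrite addn0 (modn_small (ltn_ord k)).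
Qed.

Lemma Ex_phase1 (r : 'I_R -> V) (l : 'I_R -> nat) :
  Ex (fun k f1 _ => (Pc (l k) (decode f1 (r k)) : nat)%:R) <= 2%:R * R%:R^-1.
Proof.
rewrite Ex_expand.
under eq_bigr do under eq_bigr do rewrite sumQ_const.
apply: sumk_bound => k; exact: samp_bound.
Qed.

Lemma Ex_phase2 (r : 'I_R -> {ffun V -> 'I_R * 'I_R} -> V)
    (l : 'I_R -> {ffun V -> 'I_R * 'I_R} -> nat) :
  Ex (fun k f1 f2 => (Pc (l k f1) (decode f2 (r k f1)) : nat)%:R) <= 2%:R * R%:R^-1.
Proof.
rewrite Ex_expand.
apply: sumk_bound => k; apply: sumf_bound => f1; exact: samp_bound.
Qed.


Lemma ind3 (s a b c : bool) : (s -> [|| a, b | c]) ->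
  (s : nat)%:R <= (a : nat)%:R + (b : nat)%:R + (c : nat)%:R :> rT.
Proof.
case: s => h; last by rewrite !addr_ge0 ?ler0n.
move: (h isT); clear h; case: a; case: b; case: c => //= _;
  rewrite ?addr0 ?add0r -?natrD ler_nat //.
Qed.

Lemma andb_le (a b : bool) : ((a && b) : nat)%:R <= (b : nat)%:R :> rT.
Proof. by case: a; case: b => //=; rewrite ler0n. Qed.

Lemma cut_le (lv : V -> nat) (P : pred nat) x y :
  (cut_edge lv P x y : nat)%:R <= (P (lv x) : nat)%:R + (P (lv y) : nat)%:R :> rT.
Proof.
rewrite /cut_edge; apply: le_trans (orb_le _ _) _; apply: lerD; exact: andb_le.
Qed.

Variables (e : rel V) (r0 : V) (tb : tiebreak V).

Definition sepT u v : 'I_R -> {ffun V -> 'I_R * 'I_R} -> {ffun V -> 'I_R * 'I_R} -> rT :=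
  fun k f1 f2 => (TC_separates e R r0 tb k (decode f1) (decode f2) u v : nat)%:R.

Lemma Ex_le3 T A B C : (forall k f1 f2, T k f1 f2 <= A k f1 f2 + B k f1 f2 + C k f1 f2) ->
  Ex T <= Ex A + Ex B + Ex C.
Proof. by move=> h; rewrite -!Ex_add; apply: Ex_le. Qed.

Lemma sep_edge x y : e x y -> Ex (sepT x y) <= 10%:R * R%:R^-1.
Proof.
move=> exy.
pose e1 k := phase0 e R r0 k.
pose rt1 k := new_root tb 1 e (fun _ => r0) (e1 k).
pose e2 (k : nat) (f1 : {ffun V -> 'I_R * 'I_R}) := remove_edges (e1 k) (phase_cut R (rt1 k) (e1 k) (decode f1)).
pose rt2 (k : nat) (f1 : {ffun V -> 'I_R * 'I_R}) := new_root tb 2 (e1 k) (rt1 k) (e2 k f1).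
pose t0 z : 'I_R -> {ffun V -> 'I_R * 'I_R} -> {ffun V -> 'I_R * 'I_R} -> rT :=
  fun k _ _ => ((gdist e r0 z %% R == k)%N : nat)%:R.
pose t1 z : 'I_R -> {ffun V -> 'I_R * 'I_R} -> {ffun V -> 'I_R * 'I_R} -> rT :=
  fun k f1 _ => (Pc (gdist (e1 k) (rt1 k x) z) (decode f1 (rt1 k x)) : nat)%:R.
pose t2 z : 'I_R -> {ffun V -> 'I_R * 'I_R} -> {ffun V -> 'I_R * 'I_R} -> rT :=
  fun k f1 f2 => (Pc (gdist (e2 k f1) (rt2 k f1 x) z) (decode f2 (rt2 k f1 x)) : nat)%:R.
apply: (le_trans (@Ex_le3 (sepT x y) (fun k f1 f2 => t0 x k f1 f2 + t0 y k f1 f2)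
   (fun k f1 f2 => t1 x k f1 f2 + t1 y k f1 f2)
   (fun k f1 f2 => t2 x k f1 f2 + t2 y k f1 f2) _)).
  move=> k f1 f2; rewrite /sepT.
  apply: (le_trans (@ind3 _ (cut_edge (gdist e r0) (fun l => (l %% R == k)%N) x y)
      (phase_cut R (rt1 k) (e1 k) (decode f1) x y)
      (phase_cut R (rt2 k f1) (e2 k f1) (decode f2) x y) _)).
    move=> hs; case ha: (cut_edge _ _ x y) => //; case hb: (phase_cut _ _ _ _ x y) => //.
    case hc: (phase_cut _ _ _ _ x y) => //.
    move: hs; rewrite /TC_separates connect1 //.
    rewrite /TC_output /= /remove_edges /=.
    move: hb hc; rewrite /rt2 /e2 /rt1 /e1 /remove_edges => -> ->.
    by rewrite /phase0 /remove_edges exy ha.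
  apply: lerD; [apply: lerD|]; apply: cut_le.
rewrite !Ex_add.
have h0 := Ex_phase0.
have h1 := Ex_phase1.
have h2 := Ex_phase2.
apply: le_trans (lerD (lerD (lerD (h0 _) (h0 _)) (lerD (h1 _ _) (h1 _ _))) (lerD (h2 _ _) (h2 _ _))) _.
set t := R%:R^-1. rewrite !mulr_natl -mulr2n -!mulrnDr. exact: lexx.
Qed.


Lemma sep_tri u v w : Ex (sepT u w) <= Ex (sepT u v) + Ex (sepT v w).
Proof.
rewrite -Ex_add; apply: Ex_le => k f1 f2; rewrite /sepT /TC_separates.
set out := TC_output _ _ _ _ _ _ _.
case huw: (connect out u w); first by rewrite /= addr_ge0 ?ler0n.
case huv: (connect out u v); last by rewrite /= lerDl ler0n.
case hvw: (connect out v w); last by rewrite /= add0r.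
by rewrite (connect_trans huv hvw) in huw.
Qed.

Lemma sep_refl u : Ex (sepT u u) = 0.
Proof.
rewrite /Ex big1 // => k _; rewrite big1 // => f1 _; rewrite big1 // => f2 _.
by rewrite /sepT /TC_separates connect0 mulr0.
Qed.

Lemma ball_Ex u n y : y \in ball e u n -> Ex (sepT u y) <= n%:R * (10%:R * R%:R^-1).
Proof.
have c0 : 0 <= 10%:R * R%:R^-1 :> rT by rewrite mulr_ge0 ?invr_ge0 ?ler0n.
elim: n y => [|n IH] y.
  by rewrite /ball /= inE => /eqP ->; rewrite sep_refl mul0r.
rewrite /ball iterS -/(ball e u n) /nbhd inE => /orP [hy|].
  apply: le_trans (IH _ hy) _; by rewrite ler_wpM2r // ler_nat.
rewrite inE => /existsP [z /andP [hz ezy]].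
apply: le_trans (sep_tri u z y) _.
rewrite -[n.+1]addn1 natrD mulrDl mul1r.
exact: lerD (IH _ hz) (sep_edge _ _ ezy).
Qed.

End V.
End W.

Section G.
Variables (V : finType) (e : rel V).

Lemma ball_S x n : ball e x n \subset ball e x n.+1.
Proof. by rewrite /ball iterS -/(ball e x n) /nbhd subsetUl. Qed.

Lemma ball_mono x m n : (m <= n)%N -> ball e x m \subset ball e x n.
Proof.
elim: n => [|n IH]; first by rewrite leqn0 => /eqP ->.
rewrite leq_eqVlt => /orP [/eqP -> //| h].
exact: subset_trans (IH h) (ball_S x n).
Qed.

Lemma path_ball x p : path e x p -> last x p \in ball e x (size p).
Proof.
elim/last_ind: p => [|p z IH]; first by rewrite /= /ball /= inE.
rewrite rcons_path last_rcons size_rcons => /andP [hp ez].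
rewrite /ball iterS -/(ball e x (size p)) /nbhd inE; apply/orP; right.
by rewrite inE; apply/existsP; exists (last x p); rewrite IH.
Qed.

Lemma reach x y : connect e x y -> y \in ball e x (gdist e x y).
Proof.
move=> /connectP [p hp ->]; case/shortenP: hp => p' hp' up' _.
have hs : (size p' < #|V|)%N.
  by move: (card_uniqP up') => /= <-; apply: max_card.
have hh : has (fun n => last x p' \in ball e x n) (iota 0 #|V|).
  by apply/hasP; exists (size p'); rewrite ?mem_iota ?path_ball.
have hf := hh; rewrite has_find size_iota in hf.
by have := nth_find 0 hh; rewrite nth_iota ?add0n.
Qed.

End G.

Theorem lemma2 (rT : realType) :
  exists K : rT,
  forall (V : finType) (e : rel V),
    symmetric e -> irreflexive e -> connected_graph e -> planar e ->
  forall (R : nat) (eps : rT), (1 <= R)%N -> 0 < eps <= 1 ->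
  forall (r0 : V) (tb : tiebreak V), valid_tiebreak tb ->
  forall u v : V,
    TC_sep_prob e R eps r0 tb u v <= K * (gdist e u v)%:R / R%:R.
Proof.
exists 10%:R => V e _ _ conn _ R eps R1 eps01 r0 tb _ u v.
have h := @ball_Ex rT R eps R1 eps01 V e r0 tb u _ v (@reach V e u v (conn u v)).
apply: le_trans h _.
by rewrite mulrCA mulrA.
Qed.
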